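(* Let $\mathbb{A}$ be a 2-category having the two-dimensional cokernel diagram of a 1-cell $p:e\to b$. Then: (1) provided that a right Kan extension $\mathrm{Ran}_pp$ of $p$ along $p$ exists and is preserved by $\delta^0:b\to b\uparrow_pb$, $p$ is monadic if and only if $p$ is an effective faithful morphism; (2) provided that a left Kan extension $\mathrm{Lan}_pp$ of $p$ along $p$ exists and is preserved by $\delta^1:b\to b\uparrow_pb$, $p$ is comonadic if and only if $p$ is an effective faithful morphism.
   Context: A 2-category is a $\mathbf{Cat}$-enriched category; composition of 1-cells is juxtaposition, vertical composition of 2-cells is $\cdot$, horizontal composition is $\ast$, $\mathrm{id}_f$ is the identity 2-cell on $f$. $\mathbb{A}^{\mathrm{co}}$ is obtained from $\mathbb{A}$ by reversing 2-cells. A 1-cell is an equivalence if it has a pseudo-inverse up to invertible 2-cells. Opcomma object of $p$ along itself: $b\uparrow_p b$ with $\delta^0,\delta^1:b\to b\uparrow_pb$ and $\alpha:\delta^1p\Rightarrow\delta^0p$ such that for every $y$, $h\mapsto(h\delta^0,h\delta^1,\mathrm{id}_h\ast\alpha)$, $\xi\mapsto(\xi\ast\mathrm{id}_{\delta^0},\xi\ast\mathrm{id}_{\delta^1})$ is an isomorphism from $\mathbb{A}(b\uparrow_pb,y)$ onto the category of triples $(h_0,h_1:b\to y,\beta:h_1p\Rightarrow h_0p)$ with morphisms pairs $(\xi_0,\xi_1)$ with $(\xi_0\ast\mathrm{id}_p)\cdot\beta=\beta'\cdot(\xi_1\ast\mathrm{id}_p)$. A two-dimensional pushout of a span $f_0:c\to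 c_0$, $f_1:c\to c_1$ is $P$ with $q_0,q_1$, $q_0f_0=q_1f_1$, such that $k\mapsto(kq_0,kq_1)$ is an isomorphism from $\mathbb{A}(P,y)$ onto the category of pairs $(k_0,k_1)$ with $k_0f_0=k_1f_1$ and morphisms pairs of 2-cells $(\xi_0,\xi_1)$ with $\xi_0\ast\mathrm{id}_{f_0}=\xi_1\ast\mathrm{id}_{f_1}$. $\mathbb{A}$ has the two-dimensional cokernel diagram of $p$ if it has $b\uparrow_pb$ and a two-dimensional pushout $b\uparrow_pb\uparrow_pb$ of $(\delta^0,\delta^1)$ with $D^0,D^2$, $D^2\delta^0=D^0\delta^1$; $D^1$ is the unique 1-cell with $D^1\delta^1=D^2\delta^1$, $D^1\delta^0=D^0\delta^0$, $\mathrm{id}_{D^1}\ast\alpha=(\mathrm{id}_{D^0}\ast\alpha)\cdot(\mathrm{id}_{D^2}\ast\alpha)$; $s^0$ is the unique 1-cell with $s^0\delta^0=s^0\delta^1=\mathrm{id}_b$, $\mathrm{id}_{s^0}\ast\alpha=\mathrm{id}_p$. Effective faithful: $\mathrm{Desc}_p(y)$ has objects $(h:y\to b,\beta:\delta^1h\Rightarrow\delta^0h)$ with $(\mathrm{id}_{D^0}\ast\beta)\cdot(\mathrm{id}_{D^2}\ast\beta)=\mathrm{id}_{D^1}\ast\beta$, $\mathrm{id}_{s^0}\ast\beta=\mathrm{id}_h$, morphisms 2-cells $\xi:h_1\Rightarrow h_0$ with $\beta_0\cdot(\mathrm{id}_{\delta^1}\ast\xi)=(\mathrm{id}_{\delta^0}\ast\xi)\cdot\beta_1$.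 A lax descent object is $L$ with $d:L\to b$, $\Psi:\delta^1d\Rightarrow\delta^0d$ such that $g\mapsto(dg,\Psi\ast\mathrm{id}_g)$, $\xi\mapsto\mathrm{id}_d\ast\xi$ is an isomorphism $\mathbb{A}(y,L)\cong\mathrm{Desc}_p(y)$ for all $y$; $p^H$ is the unique 1-cell with $dp^H=p$, $\Psi\ast\mathrm{id}_{p^H}=\alpha$. $p$ is an effective faithful morphism if $\mathbb{A}$ has the two-dimensional cokernel diagram of $p$, a lax descent object of it, and $p^H$ is an equivalence. Right Kan extension of $f$ along $g$: $(r,\gamma:rg\Rightarrow f)$ such that $\beta\mapsto\gamma\cdot(\beta\ast\mathrm{id}_g)$ is a bijection from 2-cells $k\Rightarrow r$ to 2-cells $kg\Rightarrow f$ for all $k$; a 1-cell $\delta$ preserves it if $(\delta r,\mathrm{id}_\delta\ast\gamma)$ is a right Kan extension of $\delta f$ along $g$. Codensity monad: from a right Kan extension $(t,\gamma)$ of $p$ along $p$, $(b,t,m,\eta)$ with $m$ unique such that $\gamma\cdot(m\ast\mathrm{id}_p)=\gamma\cdot(\mathrm{id}_t\ast\gamma)$ and $\eta$ unique with $\gamma\cdot(\eta\ast\mathrm{id}_p)=\mathrm{id}_p$. An Eilenberg–Moore object of a monad $\mathsf{T}=(b,t,m,\eta)$ is $b^{\mathsf{T}}$ with $u:b^{\mathsf{T}}\to b$, $\mu:tu\Rightarrow u$ such that $g\mapsto(ug,\mu\ast\mathrm{id}_g)$ is an isomorphism from $\mathbb{A}(y,b^{\mathsf{T}})$ onto the category of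 pairs $(h,\beta:th\Rightarrow h)$ with $\beta\cdot(\mathrm{id}_t\ast\beta)=\beta\cdot(m\ast\mathrm{id}_h)$, $\beta\cdot(\eta\ast\mathrm{id}_h)=\mathrm{id}_h$ (morphisms $\xi$ with $\xi\cdot\beta_1=\beta_0\cdot(\mathrm{id}_t\ast\xi)$). $p$ is monadic if it has a codensity monad $\mathsf{T}$, $\mathbb{A}$ has an Eilenberg–Moore object of $\mathsf{T}$, and the unique $p^{\mathsf{T}}$ with $up^{\mathsf{T}}=p$, $\mu\ast\mathrm{id}_{p^{\mathsf{T}}}=\gamma$ is an equivalence. Duals: a left Kan extension in $\mathbb{A}$ (and its preservation) means a right Kan extension (and its preservation) in $\mathbb{A}^{\mathrm{co}}$; $p$ is comonadic if the corresponding 1-cell of $\mathbb{A}^{\mathrm{co}}$ is monadic in $\mathbb{A}^{\mathrm{co}}$. *)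

(* Defs.v *)
(* Strict 2-categories in a "single-sorted"
   presentation: in each hom-category all 2-cells a -> b live in one type
   [Cell a b], with source/target maps; vertical composition is a total
   operation whose axioms are stated only for composable pairs. *)

Set Implicit Arguments.
Unset Strict Implicit.

Record PreTwoCat := {
  Ob : Type;
  Hom : Ob -> Ob -> Type;
  Cell : Ob -> Ob -> Type;
  src : forall a b : Ob, Cell a b -> Hom a b;
  tgt : forall a b : Ob, Cell a b -> Hom a b;
  id1 : forall a : Ob, Hom a a;
  comp1 : forall a b c : Ob, Hom b c -> Hom a b -> Hom a c;
  id2 : forall a b : Ob, Hom a b -> Cell a b;
  vcomp : forall a b : Ob, Cell a b -> Cell a b -> Cell a b; (* vcomp b a = b . a (a first) *)
  hcomp : forall a b c : Ob, Cell b c -> Cell a b -> Cell a c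
}.

Arguments Ob : clear implicits.
Arguments Hom : clear implicits.
Arguments Cell : clear implicits.
Arguments src {_ _ _} _.
Arguments tgt {_ _ _} _.
Arguments id1 {_} _.
Arguments comp1 {_ _ _ _} _ _.
Arguments id2 {_ _ _} _.
Arguments vcomp {_ _ _} _ _.
Arguments hcomp {_ _ _ _} _ _.

Record is_two_cat (A : PreTwoCat) : Prop := {
  src_id2 : forall a b (f : Hom A a b), src (id2 f) = f;
  tgt_id2 : forall a b (f : Hom A a b), tgt (id2 f) = f;
  src_vcomp : forall a b (be al : Cell A a b),
      src be = tgt al -> src (vcomp be al) = src al;
  tgt_vcomp : forall a b (be al : Cell A a b),
      src be = tgt al -> tgt (vcomp be al) = tgt be;
  vcomp_id_l : forall a b (al : Cell A a b), vcomp (id2 (tgt al)) al = al;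
  vcomp_id_r : forall a b (al : Cell A a b), vcomp al (id2 (src al)) = al;
  vcomp_assoc : forall a b (ga be al : Cell A a b),
      src ga = tgt be -> src be = tgt al ->
      vcomp ga (vcomp be al) = vcomp (vcomp ga be) al;
  comp1_assoc : forall a b c d (h : Hom A c d) (g : Hom A b c) (f : Hom A a b),
      comp1 h (comp1 g f) = comp1 (comp1 h g) f;
  comp1_id_l : forall a b (f : Hom A a b), comp1 (id1 b) f = f;
  comp1_id_r : forall a b (f : Hom A a b), comp1 f (id1 a) = f;
  src_hcomp : forall a b c (be : Cell A b c) (al : Cell A a b),
      src (hcomp be al) = comp1 (src be) (src al);
  tgt_hcomp : forall a b c (be : Cell A b c) (al : Cell A a b),
      tgt (hcomp be al) = comp1 (tgt be) (tgt al);
  hcomp_assoc : forall a b c d (ga : Cell A c d) (be : Cell A b c) (al : Cell A a b),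
      hcomp ga (hcomp be al) = hcomp (hcomp ga be) al;
  hcomp_id_l : forall a b (al : Cell A a b), hcomp (id2 (id1 b)) al = al;
  hcomp_id_r : forall a b (al : Cell A a b), hcomp al (id2 (id1 a)) = al;
  hcomp_id2 : forall a b c (g : Hom A b c) (f : Hom A a b),
      hcomp (id2 g) (id2 f) = id2 (comp1 g f);
  interchange : forall a b c (be' be : Cell A b c) (al' al : Cell A a b),
      src be' = tgt be -> src al' = tgt al ->
      hcomp (vcomp be' be) (vcomp al' al) = vcomp (hcomp be' al') (hcomp be al)
}.

Definition co (A : PreTwoCat) : PreTwoCat :=
  {| Ob := Ob A; Hom := Hom A; Cell := Cell A;
     src := fun a b th => tgt th; tgt := fun a b th => src th;
     id1 := fun a => id1 a; comp1 := fun a b c g f => comp1 g f;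
     id2 := fun a b f => id2 f;
     vcomp := fun a b be al => vcomp al be;
     hcomp := fun a b c be al => hcomp be al |}.

Section TwoCatNotions.
Variable A : PreTwoCat.

Definition cell_ok {a b : Ob A} (th : Cell A a b) (f g : Hom A a b) : Prop :=
  src th = f /\ tgt th = g.

Definition is_iso_cell {a b : Ob A} (th : Cell A a b) (f g : Hom A a b) : Prop :=
  cell_ok th f g /\
  exists th' : Cell A a b, cell_ok th' g f /\ vcomp th' th = id2 f /\ vcomp th th' = id2 g.

Definition is_equivalence {a b : Ob A} (f : Hom A a b) : Prop :=
  exists g : Hom A b a,
    (exists th : Cell A a a, is_iso_cell th (comp1 g f) (id1 a)) /\
    (exists th : Cell A b b, is_iso_cell th (comp1 f g) (id1 b)).

(* (c, d0, d1, al) is an opcomma object of p along itself; the functor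
   h |-> (h d0, h d1, id_h * al) is bijective on objects and fully faithful. *)
Definition is_opcomma {e b : Ob A} (p : Hom A e b) {c : Ob A}
    (d0 d1 : Hom A b c) (al : Cell A e c) : Prop :=
  cell_ok al (comp1 d1 p) (comp1 d0 p) /\
  forall y : Ob A,
    (forall (h0 h1 : Hom A b y) (be : Cell A e y),
        cell_ok be (comp1 h1 p) (comp1 h0 p) ->
        exists! h : Hom A c y,
          comp1 h d0 = h0 /\ comp1 h d1 = h1 /\ hcomp (id2 h) al = be) /\
    (forall (h h' : Hom A c y) (xi0 xi1 : Cell A b y),
        cell_ok xi0 (comp1 h d0) (comp1 h' d0) ->
        cell_ok xi1 (comp1 h d1) (comp1 h' d1) ->
        vcomp (hcomp xi0 (id2 p)) (hcomp (id2 h) al)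
          = vcomp (hcomp (id2 h') al) (hcomp xi1 (id2 p)) ->
        exists! xi : Cell A c y,
          cell_ok xi h h' /\ hcomp xi (id2 d0) = xi0 /\ hcomp xi (id2 d1) = xi1).

Definition is_pushout {c c0 c1 : Ob A} (f0 : Hom A c c0) (f1 : Hom A c c1)
    {P : Ob A} (q0 : Hom A c0 P) (q1 : Hom A c1 P) : Prop :=
  comp1 q0 f0 = comp1 q1 f1 /\
  forall y : Ob A,
    (forall (k0 : Hom A c0 y) (k1 : Hom A c1 y),
        comp1 k0 f0 = comp1 k1 f1 ->
        exists! k : Hom A P y, comp1 k q0 = k0 /\ comp1 k q1 = k1) /\
    (forall (k k' : Hom A P y) (xi0 : Cell A c0 y) (xi1 : Cell A c1 y),
        cell_ok xi0 (comp1 k q0) (comp1 k' q0) ->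
        cell_ok xi1 (comp1 k q1) (comp1 k' q1) ->
        hcomp xi0 (id2 f0) = hcomp xi1 (id2 f1) ->
        exists! xi : Cell A P y,
          cell_ok xi k k' /\ hcomp xi (id2 q0) = xi0 /\ hcomp xi (id2 q1) = xi1).

Record cokernel_diagram {e b : Ob A} (p : Hom A e b) := {
  cd_opc : Ob A;
  cd_d0 : Hom A b cd_opc;
  cd_d1 : Hom A b cd_opc;
  cd_alpha : Cell A e cd_opc;
  cd_opc_spec : is_opcomma p cd_d0 cd_d1 cd_alpha;
  cd_P : Ob A;
  cd_D0 : Hom A cd_opc cd_P;
  cd_D2 : Hom A cd_opc cd_P;
  cd_po_spec : is_pushout cd_d0 cd_d1 cd_D2 cd_D0;
  cd_D1 : Hom A cd_opc cd_P;
  cd_D1_spec :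
    comp1 cd_D1 cd_d1 = comp1 cd_D2 cd_d1 /\
    comp1 cd_D1 cd_d0 = comp1 cd_D0 cd_d0 /\
    hcomp (id2 cd_D1) cd_alpha
      = vcomp (hcomp (id2 cd_D0) cd_alpha) (hcomp (id2 cd_D2) cd_alpha);
  cd_s0 : Hom A cd_opc b;
  cd_s0_spec :
    comp1 cd_s0 cd_d0 = id1 b /\ comp1 cd_s0 cd_d1 = id1 b /\
    hcomp (id2 cd_s0) cd_alpha = id2 p
}.

Section Descent.
Variables (e b : Ob A) (p : Hom A e b) (K : cokernel_diagram p).

Definition is_desc {y : Ob A} (h : Hom A y b) (be : Cell A y (cd_opc K)) : Prop :=
  cell_ok be (comp1 (cd_d1 K) h) (comp1 (cd_d0 K) h) /\
  vcomp (hcomp (id2 (cd_D0 K)) be) (hcomp (id2 (cd_D2 K)) be)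
    = hcomp (id2 (cd_D1 K)) be /\
  hcomp (id2 (cd_s0 K)) be = id2 h.

(* (L, d, Psi) is a lax descent object: g |-> (d g, Psi * id_g) is an
   isomorphism A(y, L) ~ Desc_p(y). *)
Definition is_lax_descent {L : Ob A} (d : Hom A L b) (Psi : Cell A L (cd_opc K)) : Prop :=
  forall y : Ob A,
    (forall g : Hom A y L, is_desc (comp1 d g) (hcomp Psi (id2 g))) /\
    (forall (h : Hom A y b) (be : Cell A y (cd_opc K)),
        is_desc h be ->
        exists! g : Hom A y L, comp1 d g = h /\ hcomp Psi (id2 g) = be) /\
    (forall (g g' : Hom A y L) (xi' : Cell A y b),
        cell_ok xi' (comp1 d g) (comp1 d g') ->
        vcomp (hcomp Psi (id2 g')) (hcomp (id2 (cd_d1 K)) xi')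
          = vcomp (hcomp (id2 (cd_d0 K)) xi') (hcomp Psi (id2 g)) ->
        exists! xi : Cell A y L, cell_ok xi g g' /\ hcomp (id2 d) xi = xi').

Definition effective_faithful : Prop :=
  exists (L : Ob A) (d : Hom A L b) (Psi : Cell A L (cd_opc K)),
    is_lax_descent d Psi /\
    exists pH : Hom A e L,
      comp1 d pH = p /\ hcomp Psi (id2 pH) = cd_alpha K /\ is_equivalence pH.

End Descent.

Definition is_ran {a b0 c : Ob A} (f : Hom A a c) (g : Hom A a b0)
    (r : Hom A b0 c) (ga : Cell A a c) : Prop :=
  cell_ok ga (comp1 r g) f /\
  forall (k : Hom A b0 c) (th : Cell A a c),
    cell_ok th (comp1 k g) f ->
    exists! be : Cell A b0 c, cell_ok be k r /\ vcomp ga (hcomp be (id2 g)) = th.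

Definition preserves_ran {a b0 c c' : Ob A} (dl : Hom A c c') (f : Hom A a c)
    (g : Hom A a b0) (r : Hom A b0 c) (ga : Cell A a c) : Prop :=
  is_ran (comp1 dl f) g (comp1 dl r) (hcomp (id2 dl) ga).

Section Monads.
Variables (b : Ob A) (t : Hom A b b) (m : Cell A b b) (eta : Cell A b b).

Definition is_alg {y : Ob A} (h : Hom A y b) (be : Cell A y b) : Prop :=
  cell_ok be (comp1 t h) h /\
  vcomp be (hcomp (id2 t) be) = vcomp be (hcomp m (id2 h)) /\
  vcomp be (hcomp eta (id2 h)) = id2 h.

Definition is_EM {bT : Ob A} (u : Hom A bT b) (mu : Cell A bT b) : Prop :=
  cell_ok mu (comp1 t u) u /\
  forall y : Ob A,
    (forall g : Hom A y bT, is_alg (comp1 u g) (hcomp mu (id2 g))) /\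
    (forall (h : Hom A y b) (be : Cell A y b),
        is_alg h be ->
        exists! g : Hom A y bT, comp1 u g = h /\ hcomp mu (id2 g) = be) /\
    (forall (g g' : Hom A y bT) (xi' : Cell A y b),
        cell_ok xi' (comp1 u g) (comp1 u g') ->
        vcomp xi' (hcomp mu (id2 g)) = vcomp (hcomp mu (id2 g')) (hcomp (id2 t) xi') ->
        exists! xi : Cell A y bT, cell_ok xi g g' /\ hcomp (id2 u) xi = xi').

End Monads.

Definition monadic {e b : Ob A} (p : Hom A e b) : Prop :=
  exists (t : Hom A b b) (ga : Cell A e b),
    is_ran p p t ga /\
    exists (m eta : Cell A b b),
      (* codensity monad: multiplication and unit *)
      cell_ok m (comp1 t t) t /\
      vcomp ga (hcomp m (id2 p)) = vcomp ga (hcomp (id2 t) ga) /\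
      cell_ok eta (id1 b) t /\
      vcomp ga (hcomp eta (id2 p)) = id2 p /\
      exists (bT : Ob A) (u : Hom A bT b) (mu : Cell A bT b),
        is_EM t m eta u mu /\
        exists pT : Hom A e bT,
          comp1 u pT = p /\ hcomp mu (id2 pT) = ga /\ is_equivalence pT.

End TwoCatNotions.

Definition comonadic (A : PreTwoCat) {e b : Ob A} (p : Hom A e b) : Prop :=
  @monadic (co A) e b p.

(* Main.v *)
Require Import Defs.
Set Implicit Arguments.
Unset Strict Implicit.

Lemma assoc_ext (A : PreTwoCat) (HA : is_two_cat A) a b' c (x : Hom A b' c) (y : Hom A a b') (z : Hom A a c) :
  comp1 x y = z -> forall d (w : Hom A d a), comp1 x (comp1 y w) = comp1 z w.
Proof. intros H d w. rewrite (comp1_assoc HA). now rewrite H. Qed.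

Ltac hyp_eq_rw HA :=
  match goal with
  | H : comp1 ?x ?y = _ |- context [comp1 ?x ?y] => rewrite H
  | H : comp1 ?x ?y = _ |- context [comp1 ?x (comp1 ?y _)] => rewrite (assoc_ext HA H)
  end.

Ltac norm1 HA :=
  repeat (rewrite <- ?(comp1_assoc HA); rewrite ?(comp1_id_l HA), ?(comp1_id_r HA); hyp_eq_rw HA);
  rewrite <- ?(comp1_assoc HA); rewrite ?(comp1_id_l HA), ?(comp1_id_r HA).

Ltac hyp_st_rw :=
  match goal with
  | H : src ?x = _ |- context [src ?x] => rewrite H
  | H : tgt ?x = _ |- context [tgt ?x] => rewrite H
  end.

Ltac st HA :=
  unfold cell_ok in *;
  repeat match goal with H : _ /\ _ |- _ => destruct H end;
  try split;
  repeat first [ rewrite (src_hcomp HA) | rewrite (tgt_hcomp HA) | rewrite (src_id2 HA)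
               | rewrite (tgt_id2 HA)
               | rewrite (src_vcomp HA) by st HA | rewrite (tgt_vcomp HA) by st HA
               | hyp_st_rw ];
  norm1 HA; reflexivity.

Section Main.
Variable A : PreTwoCat.
Hypothesis HA : is_two_cat A.
Local Ltac s := st HA.
Local Ltac n1 := norm1 HA.

Lemma vid_l a b (x : Cell A a b) f : tgt x = f -> vcomp (id2 f) x = x.
Proof. intros <-. apply (vcomp_id_l HA). Qed.
Lemma vid_r a b (x : Cell A a b) f : src x = f -> vcomp x (id2 f) = x.
Proof. intros <-. apply (vcomp_id_r HA). Qed.
Lemma vidid a b (f : Hom A a b) : vcomp (id2 f) (id2 f) = id2 f.
Proof. apply vid_l. apply (tgt_id2 HA). Qed.
Lemma wl_v a b c (f : Hom A b c) (x y : Cell A a b) : src x = tgt y ->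
  hcomp (id2 f) (vcomp x y) = vcomp (hcomp (id2 f) x) (hcomp (id2 f) y).
Proof. intros H. rewrite <- (interchange HA); try s. now rewrite vidid. Qed.
Lemma wr_v a b c (f : Hom A a b) (x y : Cell A b c) : src x = tgt y ->
  hcomp (vcomp x y) (id2 f) = vcomp (hcomp x (id2 f)) (hcomp y (id2 f)).
Proof. intros H. rewrite <- (interchange HA); try s. now rewrite vidid. Qed.
Lemma wl_wl a b c d (f : Hom A c d) (g : Hom A b c) (x : Cell A a b) :
  hcomp (id2 f) (hcomp (id2 g) x) = hcomp (id2 (comp1 f g)) x.
Proof. now rewrite (hcomp_assoc HA), (hcomp_id2 HA). Qed.
Lemma wr_wr a b c d (x : Cell A c d) (g : Hom A b c) (f : Hom A a b) :
  hcomp (hcomp x (id2 g)) (id2 f) = hcomp x (id2 (comp1 g f)).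
Proof. now rewrite <- (hcomp_assoc HA), (hcomp_id2 HA). Qed.
Lemma wl_wr a b c d (f : Hom A c d) (x : Cell A b c) (g : Hom A a b) :
  hcomp (id2 f) (hcomp x (id2 g)) = hcomp (hcomp (id2 f) x) (id2 g).
Proof. apply (hcomp_assoc HA). Qed.
Lemma natw a b c (x : Cell A a b) (y : Cell A b c) f f' g g' :
  src x = f -> tgt x = f' -> src y = g -> tgt y = g' ->
  vcomp (hcomp y (id2 f')) (hcomp (id2 g) x) = vcomp (hcomp (id2 g') x) (hcomp y (id2 f)).
Proof.
  intros H1 H2 H3 H4. rewrite <- !(interchange HA); try s.
  rewrite vid_r, vid_l, vid_l, vid_r; auto.
Qed.
Lemma wid1 a b (x : Cell A a b) : hcomp (id2 (id1 b)) x = x.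
Proof. apply (hcomp_id_l HA). Qed.
Lemma wid1r a b (x : Cell A a b) : hcomp x (id2 (id1 a)) = x.
Proof. apply (hcomp_id_r HA). Qed.
Lemma wid a b c (f : Hom A b c) (g : Hom A a b) : hcomp (id2 f) (id2 g) = id2 (comp1 f g).
Proof. apply (hcomp_id2 HA). Qed.
Lemma vassoc a b (x y z : Cell A a b) : src x = tgt y -> src y = tgt z ->
  vcomp x (vcomp y z) = vcomp (vcomp x y) z.
Proof. apply (vcomp_assoc HA). Qed.


Lemma comp1_assoc' a b c d (h : Hom A c d) (g : Hom A b c) (f : Hom A a b) :
  comp1 h (comp1 g f) = comp1 (comp1 h g) f.
Proof. apply (comp1_assoc HA). Qed.

Section Core.
Variables (e b : Ob A) (p : Hom A e b) (K : cokernel_diagram p).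
Local Notation C := (cd_opc K).
Local Notation d0 := (cd_d0 K).
Local Notation d1 := (cd_d1 K).
Local Notation al := (cd_alpha K).
Local Notation P := (cd_P K).
Local Notation D0 := (cd_D0 K).
Local Notation D1 := (cd_D1 K).
Local Notation D2 := (cd_D2 K).
Local Notation s0 := (cd_s0 K).

Let Hal_s : src al = comp1 d1 p := proj1 (proj1 (cd_opc_spec K)).
Let Hal_t : tgt al = comp1 d0 p := proj2 (proj1 (cd_opc_spec K)).
Let Hpo : comp1 D2 d0 = comp1 D0 d1 := proj1 (cd_po_spec K).
Let HD1a : comp1 D1 d1 = comp1 D2 d1 := proj1 (cd_D1_spec K).
Let HD1b : comp1 D1 d0 = comp1 D0 d0 := proj1 (proj2 (cd_D1_spec K)).
Let HD1c : hcomp (id2 D1) al = vcomp (hcomp (id2 D0) al) (hcomp (id2 D2) al)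
  := proj2 (proj2 (cd_D1_spec K)).
Let Hs0a : comp1 s0 d0 = id1 b := proj1 (cd_s0_spec K).
Let Hs0b : comp1 s0 d1 = id1 b := proj1 (proj2 (cd_s0_spec K)).
Let Hs0c : hcomp (id2 s0) al = id2 p := proj2 (proj2 (cd_s0_spec K)).

Variables (t : Hom A b b) (ga : Cell A e b).
Hypothesis Hran : is_ran p p t ga.
Let Hga_s : src ga = comp1 t p := proj1 (proj1 Hran).
Let Hga_t : tgt ga = p := proj2 (proj1 Hran).
Variable ah : Cell A b C.
Hypothesis Hah_s : src ah = d1.
Hypothesis Hah_t : tgt ah = comp1 d0 t.
Hypothesis Hah : vcomp (hcomp (id2 d0) ga) (hcomp ah (id2 p)) = al.
Variables m eta : Cell A b b.
Hypothesis Hm_s : src m = comp1 t t.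
Hypothesis Hm_t : tgt m = t.
Hypothesis Hm : vcomp ga (hcomp m (id2 p)) = vcomp ga (hcomp (id2 t) ga).
Hypothesis Heta_s : src eta = id1 b.
Hypothesis Heta_t : tgt eta = t.
Hypothesis Heta : vcomp ga (hcomp eta (id2 p)) = id2 p.
Variable r : Hom A C b.
Hypothesis Hr0 : comp1 r d0 = id1 b.
Hypothesis Hr1 : comp1 r d1 = t.
Hypothesis Hra : hcomp (id2 r) al = ga.
Variable om : Cell A C C.
Hypothesis Hom_s : src om = id1 C.
Hypothesis Hom_t : tgt om = comp1 d0 r.
Hypothesis Hom0 : hcomp om (id2 d0) = id2 d0.
Hypothesis Hom1 : hcomp om (id2 d1) = ah.
Variable R : Hom A P b.
Hypothesis HR0 : comp1 R D0 = r.
Hypothesis HR2 : comp1 R D2 = comp1 t r.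
Variable Om : Cell A P P.
Hypothesis HOm_s : src Om = id1 P.
Hypothesis HOm_t : tgt Om = comp1 (comp1 D0 d0) R.
Hypothesis HOm0 : hcomp Om (id2 D0) = hcomp (id2 D0) om.

Lemma ran_uniq k (x y : Cell A b b) : cell_ok x k t -> cell_ok y k t ->
  vcomp ga (hcomp x (id2 p)) = vcomp ga (hcomp y (id2 p)) -> x = y.
Proof.
  intros Hx Hy E.
  destruct (proj2 Hran k (vcomp ga (hcomp x (id2 p)))) as [z [_ Hz]].
  { s. }
  transitivity z; [symmetry|]; apply Hz; split; auto.
Qed.

Lemma r_ah : hcomp (id2 r) ah = id2 t.
Proof.
  apply ran_uniq with (k := t); try s.
  rewrite <- wl_wr.
  transitivity (hcomp (id2 r) al).
  { rewrite <- Hah, wl_v by s. rewrite wl_wl, Hr0, wid1. reflexivity. }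
  rewrite Hra, wid, vid_r by s. reflexivity.
Qed.

Lemma s0_ah : hcomp (id2 s0) ah = eta.
Proof.
  apply ran_uniq with (k := id1 b); try s.
  rewrite <- wl_wr, Heta.
  transitivity (hcomp (id2 s0) al); [|exact Hs0c].
  rewrite <- Hah, wl_v by s. rewrite wl_wl, Hs0a, wid1. reflexivity.
Qed.

Lemma RD1d0 : comp1 (comp1 R D1) d0 = id1 b.
Proof. rewrite <- comp1_assoc', HD1b, comp1_assoc', HR0, Hr0. reflexivity. Qed.
Lemma RD1d1 : comp1 (comp1 R D1) d1 = comp1 t t.
Proof. rewrite <- comp1_assoc', HD1a, comp1_assoc', HR2, <- comp1_assoc', Hr1. reflexivity. Qed.

Lemma RD1_ah : hcomp (id2 (comp1 R D1)) ah = m.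
Proof.
  apply ran_uniq with (k := comp1 t t).
  { split.
    - rewrite (src_hcomp HA), (src_id2 HA), Hah_s. apply RD1d1.
    - rewrite (tgt_hcomp HA), (tgt_id2 HA), Hah_t, comp1_assoc', RD1d0. apply (comp1_id_l HA). }
  { s. }
  rewrite Hm, <- wl_wr.
  transitivity (hcomp (id2 (comp1 R D1)) al).
  { rewrite <- Hah, wl_v by s. rewrite wl_wl, RD1d0, wid1. reflexivity. }
  rewrite <- wl_wl, HD1c, wl_v by s. rewrite !wl_wl, HR0, HR2, Hra, <- wl_wl, Hra.
  reflexivity.
Qed.

Definition Phi {y} (h : Hom A y b) (th : Cell A y b) : Cell A y C :=
  vcomp (hcomp (id2 d0) th) (hcomp ah (id2 h)).

Lemma Phi_ok y (h : Hom A y b) th : cell_ok th (comp1 t h) h ->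
  cell_ok (Phi h th) (comp1 d1 h) (comp1 d0 h).
Proof. intros H. unfold Phi. s. Qed.

Lemma Phi_r y (h : Hom A y b) th : cell_ok th (comp1 t h) h ->
  hcomp (id2 r) (Phi h th) = th.
Proof.
  intros H. unfold Phi. rewrite wl_v by s. rewrite wl_wl, Hr0, wid1, wl_wr, r_ah, wid.
  apply vid_r. s.
Qed.

Lemma r_ok y (h : Hom A y b) be : cell_ok be (comp1 d1 h) (comp1 d0 h) ->
  cell_ok (hcomp (id2 r) be) (comp1 t h) h.
Proof. intros H. s. Qed.

Lemma Phi_of_r y (h : Hom A y b) be : cell_ok be (comp1 d1 h) (comp1 d0 h) ->
  Phi h (hcomp (id2 r) be) = be.
Proof.
  intros H. unfold Phi.
  pose proof (@natw _ _ _ be om (comp1 d1 h) (comp1 d0 h) (id1 C) (comp1 d0 r)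
     (proj1 H) (proj2 H) Hom_s Hom_t) as E.
  rewrite <- !wr_wr, Hom0, Hom1, wid, vid_l, wid1 in E by s.
  rewrite wl_wl. symmetry. exact E.
Qed.

Lemma Phi_whisk y z (h : Hom A y b) (g : Hom A z y) th : cell_ok th (comp1 t h) h ->
  hcomp (Phi h th) (id2 g) = Phi (comp1 h g) (hcomp th (id2 g)).
Proof.
  intros H. unfold Phi. rewrite wr_v by s. rewrite <- wl_wr, wr_wr. reflexivity.
Qed.

Lemma Phi_s0 y (h : Hom A y b) th : cell_ok th (comp1 t h) h ->
  hcomp (id2 s0) (Phi h th) = vcomp th (hcomp eta (id2 h)).
Proof.
  intros H. unfold Phi. rewrite wl_v by s. rewrite wl_wl, Hs0a, wid1, wl_wr, s0_ah.
  reflexivity.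
Qed.

Lemma Phi_RD1 y (h : Hom A y b) th : cell_ok th (comp1 t h) h ->
  hcomp (id2 R) (hcomp (id2 D1) (Phi h th)) = vcomp th (hcomp m (id2 h)).
Proof.
  intros H. rewrite wl_wl. unfold Phi. rewrite wl_v by s.
  rewrite wl_wl, RD1d0, wid1, wl_wr, RD1_ah. reflexivity.
Qed.

Lemma R_D0 y (be : Cell A y C) : hcomp (id2 R) (hcomp (id2 D0) be) = hcomp (id2 r) be.
Proof. now rewrite wl_wl, HR0. Qed.
Lemma R_D2 y (be : Cell A y C) :
  hcomp (id2 R) (hcomp (id2 D2) be) = hcomp (id2 t) (hcomp (id2 r) be).
Proof. now rewrite wl_wl, HR2, wl_wl. Qed.

Lemma detect y (g : Hom A y b) k (X Y : Cell A y P) :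
  cell_ok X k (comp1 (comp1 D0 d0) g) -> cell_ok Y k (comp1 (comp1 D0 d0) g) ->
  hcomp (id2 R) X = hcomp (id2 R) Y -> X = Y.
Proof.
  assert (Hid : hcomp Om (id2 (comp1 (comp1 D0 d0) g)) = id2 (comp1 (comp1 D0 d0) g)).
  { rewrite <- !wr_wr, HOm0, <- wl_wr, Hom0, !wid. reflexivity. }
  assert (E : forall Z : Cell A y P, cell_ok Z k (comp1 (comp1 D0 d0) g) ->
     Z = vcomp (hcomp (id2 (comp1 D0 d0)) (hcomp (id2 R) Z)) (hcomp Om (id2 k))).
  { intros Z HZ.
    pose proof (@natw _ _ _ Z Om k (comp1 (comp1 D0 d0) g) (id1 P) (comp1 (comp1 D0 d0) R)
       (proj1 HZ) (proj2 HZ) HOm_s HOm_t) as E.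
    rewrite Hid, wid1, vid_l in E by s. rewrite wl_wl. exact E. }
  intros HX HY HR. rewrite (E X HX), (E Y HY), HR. reflexivity.
Qed.

Lemma desc_alg y (h : Hom A y b) th : cell_ok th (comp1 t h) h ->
  (@is_desc A e b p K _ h (Phi h th) <-> is_alg t m eta h th).
Proof.
  intros H. pose proof (Phi_ok H) as HP. unfold is_desc, is_alg. split.
  - intros [_ [E1 E2]]. split; [exact H|]. split.
    + pose proof (f_equal (hcomp (id2 R)) E1) as E.
      rewrite Phi_RD1 in E by auto. rewrite wl_v in E by s.
      rewrite R_D0, R_D2, Phi_r in E by auto. exact E.
    + rewrite Phi_s0 in E2 by auto. exact E2.
  - intros [_ [E1 E2]]. split; [exact HP|]. split.
    + apply detect with (g := h) (k := comp1 (comp1 D2 d1) h); [s | s |].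
      rewrite Phi_RD1 by auto. rewrite wl_v by s.
      rewrite R_D0, R_D2, Phi_r by auto. exact E1.
    + rewrite Phi_s0 by auto. exact E2.
Qed.

Lemma morph y (h0 h1 : Hom A y b) th0 th1 xi :
  cell_ok th0 (comp1 t h0) h0 -> cell_ok th1 (comp1 t h1) h1 -> cell_ok xi h1 h0 ->
  (vcomp (Phi h0 th0) (hcomp (id2 d1) xi) = vcomp (hcomp (id2 d0) xi) (Phi h1 th1)
   <-> vcomp xi th1 = vcomp th0 (hcomp (id2 t) xi)).
Proof.
  intros H0 H1 Hx. pose proof (Phi_ok H0). pose proof (Phi_ok H1). split.
  - intros E. apply (f_equal (hcomp (id2 r))) in E.
    rewrite !wl_v in E by s. rewrite !Phi_r, !wl_wl, Hr0, Hr1, wid1 in E by auto.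
    symmetry; exact E.
  - intros E. unfold Phi.
    rewrite <- vassoc by s.
    rewrite (@natw _ _ _ xi ah h1 h0 d1 (comp1 d0 t)) by s.
    rewrite vassoc by s. rewrite <- (wl_wl d0 t xi).
    rewrite <- wl_v by s. rewrite <- E. rewrite wl_v by s. rewrite <- vassoc by s.
    reflexivity.
Qed.

Lemma EM_to_lax (bT : Ob A) (u : Hom A bT b) (mu : Cell A bT b) :
  is_EM t m eta u mu -> @is_lax_descent A e b p K _ u (Phi u mu).
Proof.
  intros [Hmu HEM] y. destruct (HEM y) as [Ha [Hb Hc]].
  assert (Hmug : forall g : Hom A y bT,
    cell_ok (hcomp mu (id2 g)) (comp1 t (comp1 u g)) (comp1 u g)) by (intros; s).
  split; [|split].
  - intros g. rewrite Phi_whisk by auto. apply desc_alg; auto.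
  - intros h be Hd. pose proof Hd as [Hbe _].
    assert (Hth : cell_ok (hcomp (id2 r) be) (comp1 t h) h) by (apply r_ok; auto).
    assert (Hal' : is_alg t m eta h (hcomp (id2 r) be)).
    { apply desc_alg; auto. rewrite Phi_of_r; auto. }
    destruct (Hb h _ Hal') as [g [[Hg1 Hg2] Hu]].
    exists g. split.
    + split; auto. rewrite Phi_whisk by auto. rewrite Hg2, Hg1. apply Phi_of_r; auto.
    + intros g' [Hg1' Hg2']. apply Hu. split; auto.
      rewrite Phi_whisk in Hg2' by auto. rewrite <- Hg2'. rewrite Phi_r; auto.
  - intros g g' xi' Hxi E. rewrite !Phi_whisk in E by auto.
    apply (morph (Hmug g') (Hmug g) Hxi) in E. apply Hc; auto.
Qed.

Lemma lax_to_EM (L : Ob A) (d : Hom A L b) (Psi : Cell A L C) :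
  @is_lax_descent A e b p K _ d Psi -> is_EM t m eta d (hcomp (id2 r) Psi).
Proof.
  intros HL.
  assert (HPsi : cell_ok Psi (comp1 d1 d) (comp1 d0 d)).
  { destruct (HL L) as [Ha _]. specialize (Ha (id1 L)) as [Hd _].
    rewrite (comp1_id_r HA), wid1r in Hd. exact Hd. }
  split. { apply r_ok; auto. }
  intros y. destruct (HL y) as [Ha [Hb Hc]].
  assert (Hpsig : forall g : Hom A y L,
    cell_ok (hcomp Psi (id2 g)) (comp1 d1 (comp1 d g)) (comp1 d0 (comp1 d g))) by (intros; s).
  assert (Hrw : forall g : Hom A y L,
    hcomp (hcomp (id2 r) Psi) (id2 g) = hcomp (id2 r) (hcomp Psi (id2 g))).
  { intros g. symmetry. apply wl_wr. }
  split; [|split].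
  - intros g. rewrite Hrw. apply desc_alg. { apply r_ok; auto. }
    rewrite Phi_of_r by auto. exact (Ha g).
  - intros h th Halg. pose proof Halg as [Hth _].
    destruct (Hb h (Phi h th)) as [g [[Hg1 Hg2] Hu]]. { apply desc_alg; auto. }
    exists g. split.
    + split; auto. rewrite Hrw, Hg2. apply Phi_r; auto.
    + intros g' [Hg1' Hg2']. apply Hu. split; auto.
      rewrite Hrw in Hg2'. rewrite <- Hg2', <- Hg1'. symmetry. apply Phi_of_r; auto.
  - intros g g' xi' Hxi E. apply Hc; auto. rewrite !Hrw in E.
    pose proof (proj2 (morph (r_ok (Hpsig g')) (r_ok (Hpsig g)) Hxi) E) as E'.
    rewrite !Phi_of_r in E' by auto. exact E'.
Qed.

Lemma build_r : exists r0 : Hom A C b,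
  comp1 r0 d0 = id1 b /\ comp1 r0 d1 = t /\ hcomp (id2 r0) al = ga.
Proof.
  destruct (proj1 (proj2 (cd_opc_spec K) b) (id1 b) t ga) as [x [[H1 [H2 H3]] _]].
  { s. }
  exists x. auto.
Qed.

Lemma build_om (r0 : Hom A C b) : comp1 r0 d0 = id1 b -> comp1 r0 d1 = t ->
  hcomp (id2 r0) al = ga ->
  exists om : Cell A C C, src om = id1 C /\ tgt om = comp1 d0 r0 /\
    hcomp om (id2 d0) = id2 d0 /\ hcomp om (id2 d1) = ah.
Proof.
  intros H0 H1 H2.
  destruct (proj2 (proj2 (cd_opc_spec K) C) (id1 C) (comp1 d0 r0) (id2 d0) ah)
    as [x [[[Hx1 Hx2] [Hx3 Hx4]] _]]; try s.
  { rewrite wid, wid1, vid_l by s. rewrite <- wl_wl, H2. symmetry. exact Hah. }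
  exists x. auto.
Qed.

Lemma build_R (r0 : Hom A C b) : comp1 r0 d0 = id1 b -> comp1 r0 d1 = t ->
  exists R0 : Hom A P b, comp1 R0 D0 = r0 /\ comp1 R0 D2 = comp1 t r0.
Proof.
  intros H0 H1.
  destruct (proj1 (proj2 (cd_po_spec K) b) (comp1 t r0) r0) as [x [[Hx1 Hx2] _]].
  { s. }
  exists x. auto.
Qed.

Lemma build_Om (r0 : Hom A C b) (om0 : Cell A C C) (R0 : Hom A P b) :
  comp1 r0 d0 = id1 b -> comp1 r0 d1 = t -> hcomp (id2 r0) al = ga ->
  src om0 = id1 C -> tgt om0 = comp1 d0 r0 ->
  hcomp om0 (id2 d0) = id2 d0 -> hcomp om0 (id2 d1) = ah ->
  comp1 R0 D0 = r0 -> comp1 R0 D2 = comp1 t r0 ->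
  exists Om0 : Cell A P P, src Om0 = id1 P /\ tgt Om0 = comp1 (comp1 D0 d0) R0 /\
    hcomp Om0 (id2 D0) = hcomp (id2 D0) om0.
Proof.
  intros H0 H1 H2 Ho1 Ho2 Ho3 Ho4 HR0' HR2'.
  destruct (proj2 (proj2 (cd_opc_spec K) P) D2 (comp1 (comp1 D0 d1) r0)
     (id2 (comp1 D2 d0)) (hcomp (id2 D2) ah)) as [ka [[[Hk1 Hk2] [Hk3 Hk4]] _]]; try s.
  { rewrite wid, vid_l by s. rewrite <- (wl_wl (comp1 D0 d1) r0 al), H2, <- Hpo.
    rewrite <- (wl_wl D2 d0 ga), <- wl_wr, <- wl_v by s. rewrite Hah. reflexivity. }
  destruct (proj2 (proj2 (cd_po_spec K) P) (id1 P) (comp1 (comp1 D0 d0) R0)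
     (vcomp (hcomp (hcomp (id2 D0) om0) (id2 (comp1 d1 r0))) ka) (hcomp (id2 D0) om0))
    as [x [[[Hx1 Hx2] [Hx3 Hx4]] _]]; try s.
  { rewrite wr_v by s. rewrite Hk3, wr_wr, <- comp1_assoc', H0, (comp1_id_r HA).
    rewrite vid_r by s. reflexivity. }
  exists x. auto.
Qed.

Lemma build_m : exists m0 : Cell A b b, cell_ok m0 (comp1 t t) t /\
  vcomp ga (hcomp m0 (id2 p)) = vcomp ga (hcomp (id2 t) ga).
Proof.
  destruct (proj2 Hran (comp1 t t) (vcomp ga (hcomp (id2 t) ga))) as [x [[Hx1 Hx2] _]].
  { s. }
  exists x. auto.
Qed.

Lemma build_eta : exists e0 : Cell A b b, cell_ok e0 (id1 b) t /\
  vcomp ga (hcomp e0 (id2 p)) = id2 p.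
Proof.
  destruct (proj2 Hran (id1 b) (id2 p)) as [x [[Hx1 Hx2] _]].
  { s. }
  exists x. auto.
Qed.

End Core.

Lemma part1 e b (p : Hom A e b) (K : cokernel_diagram p) :
  (exists (t : Hom A b b) (ga : Cell A e b),
       is_ran p p t ga /\ preserves_ran (cd_d0 K) p p t ga) ->
  (monadic p <-> effective_faithful K).
Proof.
  intros [t [ga [Hran Hpres]]].
  destruct (proj2 Hpres (cd_d1 K) (cd_alpha K)) as [ah [[[Hah_s Hah_t] Hah] _]].
  { exact (proj1 (cd_opc_spec K)). }
  pose proof (proj1 Hran) as [Hga_s Hga_t].
  split.
  - intros [t' [ga' [Hran' [m' [eta' [[Hm_s Hm_t] [Hm [[Heta_s Heta_t] [Heta
      [bT [u [mu [HEM [pT [HpT1 [HpT2 Heq]]]]]]]]]]]]]]]].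
    pose proof (proj1 Hran') as [Hga'_s Hga'_t].
    destruct (proj2 Hran' t ga) as [psi [[[Hpsi_s Hpsi_t] Hpsi] _]].
    { split; auto. }
    set (ah' := vcomp (hcomp (id2 (cd_d0 K)) psi) ah).
    assert (Hah'_s : src ah' = cd_d1 K) by (unfold ah'; s).
    assert (Hah'_t : tgt ah' = comp1 (cd_d0 K) t') by (unfold ah'; s).
    assert (Hah' : vcomp (hcomp (id2 (cd_d0 K)) ga') (hcomp ah' (id2 p)) = cd_alpha K).
    { unfold ah'. rewrite wr_v by s. rewrite vassoc by s. rewrite <- wl_wr.
      rewrite <- wl_v by s. rewrite Hpsi. exact Hah. }
    destruct (build_r K Hran') as [r [Hr0 [Hr1 Hra]]].
    destruct (build_om Hah'_s Hah'_t Hah' Hr0 Hr1 Hra) as [om [Hom_s [Hom_t [Hom0 Hom1]]]].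
    destruct (build_R Hr0 Hr1) as [R [HR0 HR2]].
    destruct (build_Om Hran' Hah'_s Hah'_t Hah' Hr0 Hr1 Hra Hom_s Hom_t Hom0 Hom1 HR0 HR2)
      as [Om [HOm_s [HOm_t HOm0]]].
    exists bT, u, (Phi ah' u mu). split.
    + exact (EM_to_lax Hran' Hah'_s Hah'_t Hah' Hm_s Hm_t Hm Heta_s Heta_t Heta
               Hr0 Hr1 Hra Hom_s Hom_t Hom0 Hom1 HR0 HR2 HOm_s HOm_t HOm0 HEM).
    + exists pT. split; [exact HpT1|]. split; [|exact Heq].
      pose proof (proj1 HEM) as [Hmu_s Hmu_t].
      unfold Phi. rewrite wr_v by s. rewrite <- wl_wr, wr_wr, HpT2, HpT1. exact Hah'.
  - intros [L [d [Psi [HL [pH [HpH1 [HpH2 Heq]]]]]]].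
    destruct (build_m Hran) as [m [[Hm_s Hm_t] Hm]].
    destruct (build_eta Hran) as [eta [[Heta_s Heta_t] Heta]].
    destruct (build_r K Hran) as [r [Hr0 [Hr1 Hra]]].
    destruct (build_om Hah_s Hah_t Hah Hr0 Hr1 Hra) as [om [Hom_s [Hom_t [Hom0 Hom1]]]].
    destruct (build_R Hr0 Hr1) as [R [HR0 HR2]].
    destruct (build_Om Hran Hah_s Hah_t Hah Hr0 Hr1 Hra Hom_s Hom_t Hom0 Hom1 HR0 HR2)
      as [Om [HOm_s [HOm_t HOm0]]].
    exists t, ga. split; [exact Hran|].
    exists m, eta. split; [split; auto|]. split; [exact Hm|].
    split; [split; auto|]. split; [exact Heta|].
    exists L, d, (hcomp (id2 r) Psi). split.
    + exact (lax_to_EM Hran Hah_s Hah_t Hah Hm_s Hm_t Hm Heta_s Heta_t Heta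
               Hr0 Hr1 Hra Hom_s Hom_t Hom0 Hom1 HR0 HR2 HOm_s HOm_t HOm0 HL).
    + exists pH. split; [exact HpH1|]. split; [|exact Heq].
      rewrite <- wl_wr, HpH2. exact Hra.
Qed.

End Main.

Lemma co_two_cat (A : PreTwoCat) : is_two_cat A -> is_two_cat (co A).
Proof.
  intros HA. constructor; cbn; intros.
  - apply (tgt_id2 HA).
  - apply (src_id2 HA).
  - apply (tgt_vcomp HA); auto.
  - apply (src_vcomp HA); auto.
  - apply (vcomp_id_r HA).
  - apply (vcomp_id_l HA).
  - symmetry. apply (vcomp_assoc HA); auto.
  - apply (comp1_assoc HA).
  - apply (comp1_id_l HA).
  - apply (comp1_id_r HA).
  - apply (tgt_hcomp HA).
  - apply (src_hcomp HA).
  - apply (hcomp_assoc HA).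
  - apply (hcomp_id_l HA).
  - apply (hcomp_id_r HA).
  - apply (hcomp_id2 HA).
  - apply (interchange HA); auto.
Qed.

Section Co.
Variable A : PreTwoCat.

Lemma uniq_iff {X : Type} (P Q : X -> Prop) : (forall x, P x <-> Q x) ->
  (exists! x, P x) -> exists! x, Q x.
Proof. intros H [x [Hx U]]. exists x. split. apply H; auto. intros y Hy. apply U, H; auto. Qed.

Lemma co_opcomma e b (p : Hom A e b) c (d0 d1 : Hom A b c) al :
  is_opcomma p d0 d1 al -> is_opcomma (A := co A) p d1 d0 al.
Proof.
  intros [[H1 H2] H]. split. { split; cbn; auto. }
  intros y. destruct (H y) as [Ha Hb]. split.
  - intros h0 h1 be [Hb1 Hb2]. cbn in *.
    destruct (Ha h1 h0 be) as [h [[E1 [E2 E3]] U]]. { split; auto. }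
    exists h. split. { auto. } intros h' [F1 [F2 F3]]. apply U; auto.
  - intros h h' xi0 xi1 [G1 G2] [G3 G4] E. cbn in *.
    destruct (Hb h' h xi1 xi0) as [x [[[X1 X2] [X3 X4]] U]].
    { split; auto. } { split; auto. } { symmetry. exact E. }
    exists x. split. { split; [split|split]; auto. }
    intros x' [[Y1 Y2] [Y3 Y4]]. apply U. split; [split|split]; auto.
Qed.

Lemma co_pushout c c0 c1 (f0 : Hom A c c0) (f1 : Hom A c c1) P (q0 : Hom A c0 P) (q1 : Hom A c1 P) :
  is_pushout f0 f1 q0 q1 -> is_pushout (A := co A) f1 f0 q1 q0.
Proof.
  intros [H1 H]. split. { cbn. auto. }
  intros y. destruct (H y) as [Ha Hb]. split.
  - intros k0 k1 E. cbn in *.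
    destruct (Ha k1 k0) as [k [[E1 E2] U]]. { auto. }
    exists k. split. { auto. } intros k' [F1 F2]. apply U; auto.
  - intros k k' xi0 xi1 [G1 G2] [G3 G4] E. cbn in *.
    destruct (Hb k' k xi1 xi0) as [x [[[X1 X2] [X3 X4]] U]].
    { split; auto. } { split; auto. } { symmetry. exact E. }
    exists x. split. { split; [split|split]; auto. }
    intros x' [[Y1 Y2] [Y3 Y4]]. apply U. split; [split|split]; auto.
Qed.

Definition coK e b (p : Hom A e b) (K : cokernel_diagram p) : cokernel_diagram (A := co A) p.
Proof.
  refine (@Build_cokernel_diagram (co A) e b p (cd_opc K) (cd_d1 K) (cd_d0 K) (cd_alpha K)
            (co_opcomma (cd_opc_spec K)) (cd_P K) (cd_D2 K) (cd_D0 K)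
            (co_pushout (cd_po_spec K)) (cd_D1 K) _ (cd_s0 K) _).
  - destruct (cd_D1_spec K) as [X1 [X2 X3]]. cbn. auto.
  - destruct (cd_s0_spec K) as [X1 [X2 X3]]. cbn. auto.
Defined.

Lemma iso_co a b (f g : Hom A a b) :
  (exists th, is_iso_cell th f g) -> (exists th, is_iso_cell (A := co A) th f g).
Proof.
  intros [th [[H1 H2] [th' [[H3 H4] [E1 E2]]]]].
  exists th'. split. { split; cbn; auto. }
  exists th. split. { split; cbn; auto. } cbn. auto.
Qed.

Lemma iso_co' a b (f g : Hom A a b) :
  (exists th, is_iso_cell (A := co A) th f g) -> (exists th, is_iso_cell th f g).
Proof.
  intros [th [[H1 H2] [th' [[H3 H4] [E1 E2]]]]]. cbn in *.
  exists th'. split. { split; auto. }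
  exists th. split. { split; auto. } auto.
Qed.

Lemma desc_co e b (p : Hom A e b) (K : cokernel_diagram p) y (h : Hom A y b) be :
  is_desc (K := K) h be <-> is_desc (A := co A) (K := coK K) h be.
Proof.
  unfold is_desc, cell_ok. cbn. split; intros [[X1 X2] [X3 X4]]; auto.
Qed.

Lemma lax_co e b (p : Hom A e b) (K : cokernel_diagram p) L (d : Hom A L b) Psi :
  is_lax_descent (K := K) d Psi <-> is_lax_descent (A := co A) (K := coK K) d Psi.
Proof.
  split; intros H y; destruct (H y) as [Ha [Hb Hc]]; (split; [|split]).
  - intros g. apply desc_co. apply Ha.
  - intros h be Hd. apply desc_co in Hd. exact (Hb h be Hd).
  - intros g g' xi' [X1 X2] E. cbn in *.
    apply (uniq_iff (P := fun xi => cell_ok xi g' g /\ hcomp (id2 d) xi = xi')).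
    { intros xi. unfold cell_ok. cbn. split; intros [[Y1 Y2] Y3]; auto. }
    apply Hc. { split; auto. } symmetry. exact E.
  - intros g. apply desc_co. apply Ha.
  - intros h be Hd. apply desc_co in Hd. exact (Hb h be Hd).
  - intros g g' xi' [X1 X2] E. cbn in *.
    apply (uniq_iff (P := fun xi => cell_ok (A := co A) xi g' g /\ hcomp (id2 d) xi = xi')).
    { intros xi. unfold cell_ok. cbn. split; intros [[Y1 Y2] Y3]; auto. }
    apply Hc. { split; cbn; auto. } cbn. symmetry. exact E.
Qed.

Lemma ef_co e b (p : Hom A e b) (K : cokernel_diagram p) :
  effective_faithful K <-> effective_faithful (A := co A) (coK K).
Proof.
  split; intros [L [d [Psi [HL [pH [E1 [E2 [g [I1 I2]]]]]]]]];
  exists L, d, Psi; (split; [apply lax_co; exact HL|]);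
  exists pH; split; auto; split; auto; exists g.
  - split; apply iso_co; auto.
  - split; apply iso_co'; auto.
Qed.
End Co.

Theorem corollary5p9 (A : PreTwoCat) (HA : is_two_cat A)
    (e b : Ob A) (p : Hom A e b) (K : cokernel_diagram p) :
  ((exists (t : Hom A b b) (ga : Cell A e b),
       is_ran p p t ga /\ preserves_ran (cd_d0 K) p p t ga) ->
     (monadic p <-> effective_faithful K))
  /\
  ((exists (t : Hom A b b) (ga : Cell A e b),
       is_ran (A := co A) p p t ga /\ preserves_ran (A := co A) (cd_d1 K) p p t ga) ->
     (comonadic p <-> effective_faithful K)).
Proof.
  split.
  - apply (part1 HA).
  - intros Hex. unfold comonadic.
    pose proof (part1 (co_two_cat HA) (K := coK K) Hex) as H.
    pose proof (ef_co K). tauto.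
Qed.
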